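(* Let $n_{k'}\le n_k$. Then $\ker(Z_{k,k'}^*Z_{k,k'})=\ker Z_{k,k'}=\mathrm{span}\{\varphi_{a_k}:a=n_{k'},\dots,n_k-1\}$, where kernels are taken of the operators restricted to $E_k$.
   Context: Let $\mathcal H$ be a finite-dimensional complex Hilbert space and $E_k,E_{k'}$ mutually orthogonal subspaces with $n_k=\dim E_k$, $n_{k'}=\dim E_{k'}$ and orthonormal bases $\{|a_k\rangle:0\le a\le n_k-1\}$, $\{|b_{k'}\rangle:0\le b\le n_{k'}-1\}$. For vectors $x,y$, $|x\rangle\langle y|$ is the operator $u\mapsto\langle y,u\rangle x$. $\zeta_k=e^{2\pi i/n_k}$. The transition operator is $Z_{k,k'}=n_k^{-1/2}\sum_{b=0}^{n_{k'}-1}\sum_{a=0}^{n_k-1}\zeta_k^{ba}|b_{k'}\rangle\langle a_k|$, and the $k$-entangled basis is $\varphi_{a_k}=n_k^{-1/2}\sum_{b=0}^{n_k-1}\zeta_k^{-ba}|b_k\rangle$, $0\le a\le n_k-1$. *)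

(* Defs.v *)
From HB Require Import structures.
From mathcomp Require Import all_boot all_order all_algebra.
From mathcomp Require Import complex.
From mathcomp Require Import reals trigo.
Set Implicit Arguments. Unset Strict Implicit. Unset Printing Implicit Defensive.
Import Order.TTheory GRing.Theory Num.Theory.
Local Open Scope ring_scope.
Local Open Scope complex_scope.

Section Defs.
Variable R : realType.
Local Notation C := R[i].
Variable N : nat.
(* The Hilbert space H is modelled as C^N (column vectors) with the standard
   inner product, conjugate-linear in the first argument. *)
Definition cdot (u v : 'cV[C]_N) : C := \sum_(i < N) (u i 0)^* * v i 0.

Definition adj m n (A : 'M[C]_(m, n)) : 'M[C]_(n, m) := (map_mx conjc A)^T.

Definition ketbra (x y : 'cV[C]_N) : 'M[C]_N := x *m adj y.

Definition onbasis n (e : 'I_n -> 'cV[C]_N) : Prop :=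
  forall i j : 'I_n, cdot (e i) (e j) = (i == j)%:R.

Definition zeta (n : nat) : C :=
  (cos (2 * pi / n%:R)) +i* (sin (2 * pi / n%:R)).

Definition invsqrt (n : nat) : C := ((Num.sqrt (n%:R : R))^-1)%:C.

(* Z_{k,k'} = n_k^{-1/2} sum_b sum_a zeta_k^{ba} |b_{k'}><a_k| *)
Definition Zop nk nk' (e : 'I_nk -> 'cV[C]_N) (f : 'I_nk' -> 'cV[C]_N)
  : 'M[C]_N :=
  invsqrt nk *: \sum_(b < nk') \sum_(a < nk)
      (zeta nk ^+ (b * a)) *: ketbra (f b) (e a).

Definition phi_basis nk (e : 'I_nk -> 'cV[C]_N) (a : 'I_nk) : 'cV[C]_N :=
  invsqrt nk *: \sum_(b < nk) (zeta nk ^- (b * a)) *: e b.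

(* membership in E_k = span of its onbasis basis *)
Definition in_span n (v : 'I_n -> 'cV[C]_N) (x : 'cV[C]_N) : Prop :=
  exists c : 'I_n -> C, x = \sum_(i < n) c i *: v i.

Definition in_span_from n (m : nat) (v : 'I_n -> 'cV[C]_N) (x : 'cV[C]_N)
  : Prop :=
  exists c : 'I_n -> C, x = \sum_(i < n | (m <= i)%N) c i *: v i.
End Defs.

(* Main.v *)
Require Import Defs.
From HB Require Import structures.
From mathcomp Require Import all_boot all_order all_algebra.
From mathcomp Require Import complex.
From mathcomp Require Import reals trigo ring.
Import Order.TTheory GRing.Theory Num.Theory.
Local Open Scope ring_scope.
Local Open Scope complex_scope.
Set Implicit Arguments. Unset Strict Implicit. Unset Printing Implicit Defensive.

Section S.
Variable R : realType.
Local Notation C := R[i].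
Variable N : nat.

Lemma cdot_mx (u v : 'cV[C]_N) : adj u *m v = (cdot u v)%:M.
Proof.
rewrite [LHS]mx11_scalar; congr (_%:M).
rewrite !mxE /cdot; apply: eq_bigr => k _; by rewrite !mxE.
Qed.

Lemma cdotDr (u v w : 'cV[C]_N) : cdot u (v + w) = cdot u v + cdot u w :> C.
Proof. by rewrite /cdot -big_split; apply: eq_bigr => k _; rewrite mxE mulrDr. Qed.

Lemma cdotZr (u : 'cV[C]_N) (a : C) v : cdot u (a *: v) = a * cdot u v.
Proof. by rewrite /cdot mulr_sumr; apply: eq_bigr => k _; rewrite mxE mulrCA. Qed.

Lemma cdot0r (u : 'cV[C]_N) : cdot u 0 = 0 :> C.
Proof. by rewrite /cdot big1 // => k _; rewrite mxE mulr0. Qed.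

Lemma cdot_sumr (I : finType) (P : pred I) (u : 'cV[C]_N) (F : I -> 'cV[C]_N) :
  cdot u (\sum_(i | P i) F i) = \sum_(i | P i) cdot u (F i).
Proof.
elim/big_rec2: _ => [|i y1 y2 _ <-]; first exact: cdot0r.
by rewrite cdotDr.
Qed.

Lemma cdot_eq0 (y : 'cV[C]_N) : cdot y y = 0 -> y = 0.
Proof.
rewrite /cdot => /eqP; rewrite psumr_eq0.
  move=> /allP H; apply/matrixP => k j; rewrite (ord1 j) mxE.
  have := H k (mem_index_enum k); rewrite implyTb mulrC mulf_eq0 conjc_eq0 orbb.
  by move/eqP.
by move=> k _; rewrite mulrC mulcJ_ge0.
Qed.

Lemma adjM m n p (A : 'M[C]_(m, n)) (B : 'M[C]_(n, p)) : adj (A *m B) = adj B *m adj A.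
Proof. by rewrite /adj map_mxM trmx_mul. Qed.

Lemma ketbra_mul (x y v : 'cV[C]_N) : ketbra x y *m v = cdot y v *: x.
Proof. by rewrite /ketbra -mulmxA cdot_mx mul_mx_scalar. Qed.

End S.
Section Z.
Variable R : realType.
Local Notation C := R[i].
Variable n : nat.
Hypothesis n0 : (0 < n)%N.
Local Notation th := (2 * pi / (n%:R : R)).

Lemma zeta_exp j : zeta R n ^+ j = cos (j%:R * th) +i* sin (j%:R * th).
Proof.
elim: j => [|j IH]; first by rewrite expr0 mul0r cos0 sin0.
rewrite exprS IH /zeta; set t := (2 * pi / n%:R).
rewrite -[j.+1]addn1 (natrD _ j 1) (mulrDl (j%:R) 1) mul1r cosD sinD.
apply/eqP; rewrite eq_complex /=; apply/andP; split; apply/eqP.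
  by rewrite [X in X - _]mulrC [X in _ - X]mulrC.
by rewrite (mulrC (cos t)) (mulrC (sin t)).

Qed.

Lemma zetan : zeta R n ^+ n = 1.
Proof.
rewrite zeta_exp mulrC divfK; last by rewrite pnatr_eq0 -lt0n.
by rewrite mulr_natl cos2pi sin2pi.
Qed.

Lemma zeta_neq1 j : (0 < j < n)%N -> zeta R n ^+ j != 1.
Proof.
move=> /andP[j0 jn]; rewrite zeta_exp; apply/negP => /eqP [] Hc _.
have y0 : 0 < @pi R * (j%:R / n%:R) < @pi R.
  apply/andP; split; first by rewrite mulr_gt0 ?pi_gt0 // divr_gt0 // ltr0n.
  rewrite gtr_pMr ?pi_gt0 // ltr_pdivrMr ?ltr0n // mul1r ltr_nat //.
have := sin_gt0_pi y0; rewrite lt0r => /andP[/negP H _]; apply: H.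
apply/eqP; apply: cos1sin0.
have : cos (@pi R * (j%:R / n%:R)) ^+ 2 = 1.
  have E : j%:R * th = (pi * (j%:R / n%:R)) *+ 2.
by rewrite -mulr_natr; ring.
  move: Hc; rewrite E cos_mulr2n => /eqP; rewrite subr_eq => /eqP H.
  apply/eqP; rewrite -(@eqr_pMn2r _ 2) //; apply/eqP; rewrite H.
  done.
move=> /eqP; rewrite sqrf_eq1 => /orP[]/eqP ->; by rewrite ?normrN normr1.
Qed.


Local Notation z := (zeta R n).

Lemma zeta_neq0 : z != 0.
Proof.
apply/negP => /eqP z0; have := zetan; rewrite z0 expr0n.
by case: n n0 => // m _ /eqP; rewrite eq_sym oner_eq0.
Qed.

Lemma zeta_inj (j b : 'I_n) : z ^+ j = z ^+ b -> j = b.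
Proof.
wlog: j b / (b < j)%N => [H E|bj E].
  case: (ltngtP b j) => [/H|/H|/val_inj //]; first by apply.
  by move=> H'; apply/esym/H'.
exfalso; have : z ^+ (j - b) == 1.
  rewrite -(inj_eq (mulfI (expf_neq0 b zeta_neq0))) -exprD (subnKC (ltnW bj)).
  by rewrite E mulr1 eqxx.
apply/negP; apply: zeta_neq1.
by rewrite subn_gt0 bj /= (leq_ltn_trans (leq_subr _ _)).
Qed.

Lemma zeta_orth (j b : 'I_n) :
  \sum_(a < n) z ^+ (a * j) * z ^- (a * b) = (j == b)%:R * n%:R.
Proof.
have E a : z ^+ (a * j) * z ^- (a * b) = (z ^+ j / z ^+ b) ^+ a.
  by rewrite exprMn exprVn -!exprM ![(_ * a)%N]mulnC.
under eq_bigr => a _ do rewrite E.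
case: eqP => [->|jb].
  rewrite divff; last exact: (expf_neq0 _ zeta_neq0).
  rewrite (eq_bigr (fun _ => 1)); last by move=> a _; rewrite expr1n.
  by rewrite sumr_const card_ord mul1r.
set w := z ^+ j / z ^+ b.
have w1 : w - 1 != 0.
  rewrite subr_eq0; apply/negP => /eqP; rewrite /w.
  move/(congr1 (fun x => x * z ^+ b)); rewrite mul1r divfK; last exact: (expf_neq0 _ zeta_neq0).
  by move/zeta_inj.
have : (w - 1) * \sum_(a < n) w ^+ a = 0.
  rewrite -subrX1 /w exprMn exprVn -!exprM mulnC exprM zetan mulnC exprM zetan.
  by rewrite !expr1n invr1 mulr1 subrr.
move/eqP; rewrite mulf_eq0 (negbTE w1) /= => /eqP ->.
by rewrite mul0r.
Qed.
End Z.

Section M.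
Variable R : realType.
Local Notation C := R[i].
Variable N : nat.

Lemma cdot_basis n (v : 'I_n -> 'cV[C]_N) (c : 'I_n -> C) i :
  onbasis v -> cdot (v i) (\sum_(j < n) c j *: v j) = c i.
Proof.
move=> Hv; rewrite cdot_sumr (bigD1 i) //= cdotZr Hv eqxx mulr1 big1 ?addr0 //.
by move=> k ki; rewrite cdotZr Hv eq_sym (negbTE ki) mulr0.
Qed.

Lemma basis_indep n (v : 'I_n -> 'cV[C]_N) (g : 'I_n -> C) :
  onbasis v -> \sum_(j < n) g j *: v j = 0 -> forall i, g i = 0.
Proof. by move=> Hv H i; rewrite -(cdot_basis g i Hv) H cdot0r. Qed.

Lemma Zop_mul nk nk' (e : 'I_nk -> 'cV[C]_N) (f : 'I_nk' -> 'cV[C]_N) x :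
  Zop e f *m x = invsqrt R nk *: \sum_(b < nk')
     (\sum_(a < nk) zeta R nk ^+ (b * a) * cdot (e a) x) *: f b.
Proof.
rewrite /Zop -scalemxAl mulmx_suml; congr (_ *: _); apply: eq_bigr => b _.
rewrite mulmx_suml scaler_suml; apply: eq_bigr => a _.
by rewrite -scalemxAl ketbra_mul scalerA.
Qed.

Lemma phi_sum nk (e : 'I_nk -> 'cV[C]_N) (P : pred 'I_nk) (d : 'I_nk -> C) :
  \sum_(a < nk | P a) d a *: phi_basis e a =
  \sum_(b < nk) (invsqrt R nk * \sum_(a < nk | P a) d a * zeta R nk ^- (b * a)) *: e b.
Proof.
rewrite /phi_basis.
under eq_bigr => a _ do rewrite scalerA scaler_sumr.
rewrite exchange_big /=; apply: eq_bigr => b _.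
rewrite mulr_sumr scaler_suml; apply: eq_bigr => a _.
by rewrite scalerA mulrCA mulrA.
Qed.

End M.

Lemma invsqrt_sq (R : realType) n : (0 < n)%N -> invsqrt R n * invsqrt R n * n%:R = 1.
Proof.
move=> n0; rewrite /invsqrt -(rmorph_nat (real_complex R) n) -!rmorphM /=.
rewrite -invfM -expr2 sqr_sqrtr ?ler0n // mulVf ?rmorph1 //.
by rewrite pnatr_eq0 -lt0n.
Qed.

Lemma invsqrt_neq0 (R : realType) n : (0 < n)%N -> invsqrt R n != 0.
Proof.
move=> n0; apply/negP => /eqP H; have := invsqrt_sq R n0.
by rewrite H !mul0r => /eqP; rewrite eq_sym oner_eq0.
Qed.

Lemma zeta_orthn (R : realType) n (n0 : (0 < n)%N) (j b : nat) : (j < n)%N -> (b < n)%N ->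
  \sum_(a < n) zeta R n ^+ (a * j) * zeta R n ^- (a * b) = (j == b)%:R * n%:R.
Proof. move=> hj hb; exact: (zeta_orth R n0 (Ordinal hj) (Ordinal hb)). Qed.

Set Implicit Arguments.
Unset Implicit Arguments.

Theorem corollary2p5 (R : realType) (N nk nk' : nat)
  (e : 'I_nk -> 'cV[R[i]]_N) (f : 'I_nk' -> 'cV[R[i]]_N) :
  onbasis e -> onbasis f ->
  (forall (a : 'I_nk) (b : 'I_nk'), cdot (e a) (f b) = 0) ->
  (nk' <= nk)%N ->
  forall x : 'cV[R[i]]_N,
    ((in_span e x /\ adj (Zop e f) *m Zop e f *m x = 0)
       <-> (in_span e x /\ Zop e f *m x = 0))
    /\ ((in_span e x /\ Zop e f *m x = 0)
       <-> in_span_from nk' (phi_basis e) x).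
Proof.
move=> He Hf Hef Hmn x; split.
  split=> -[Hs H]; split=> //; last by rewrite -mulmxA H mulmx0.
  apply: cdot_eq0; set y := Zop e f *m x.
  have : adj y *m y = 0 by rewrite /y adjM -mulmxA [adj (Zop e f) *m _]mulmxA H mulmx0.
  by rewrite cdot_mx => /matrixP /(_ 0 0); rewrite !mxE /= mulr1n.
case: (posnP nk) => [nk0|nk0].
  subst nk; have m0 : nk' = 0%N by apply/eqP; rewrite -leqn0.
  subst nk'; split.
    by move=> [[c ->] _]; exists (fun _ => 0); rewrite !big_ord0.
  move=> [d ->]; rewrite !big_ord0; split; first by exists (fun _ => 0); rewrite big_ord0.
  by rewrite /Zop big_ord0 scaler0 mul0mx.
set s := invsqrt R nk; set z := zeta R nk.
have sq := invsqrt_sq R nk0; have s0 := invsqrt_neq0 R nk0.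
split.
  move=> [[c xE] Zx0].
  have g0 : forall b : 'I_nk', \sum_(a < nk) z ^+ (b * a) * c a = 0.
    move: Zx0; rewrite Zop_mul => /eqP; rewrite scaler_eq0 (negbTE s0) /= => /eqP H b.
    transitivity (\sum_(a < nk) z ^+ (b * a) * cdot (e a) x).
      by apply: eq_bigr => a _; rewrite xE cdot_basis.
    exact: (basis_indep Hf H b).
  exists (fun a : 'I_nk => s * \sum_(j < nk) z ^+ (a * j) * c j).
  rewrite big_mkcond /=.
  rewrite (eq_bigr (fun a : 'I_nk => (s * \sum_(j < nk) z ^+ (a * j) * c j) *: phi_basis e a)); last first.
    move=> a _; case: leqP => // am.
    by have := g0 (Ordinal am); rewrite /= => ->; rewrite mulr0 scale0r.
  rewrite (phi_sum e (fun _ => true)) {1}xE; apply: eq_bigr => b _; congr (_ *: _).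
  symmetry.
  transitivity (s * \sum_(j < nk) s * (c j * ((j == b)%:R * nk%:R))).
    congr (_ * _).
    rewrite (eq_bigr (fun a : 'I_nk => \sum_(j < nk) s * (c j * (z ^+ (a * j) * z ^- (a * b))))); last first.
      move=> a _; rewrite mulr_sumr mulr_suml; apply: eq_bigr => j _.
      rewrite (mulnC b a); ring.
    rewrite exchange_big /=; apply: eq_bigr => j _.
    by rewrite -mulr_sumr -mulr_sumr zeta_orthn.
  rewrite (bigD1 b) //= eqxx big1 ?addr0; last first.
    by move=> j jb; rewrite (negbTE jb) mul0r !mulr0.
  by rewrite mul1r mulrA [c b * _]mulrC mulrA sq mul1r.
move=> [d xE].
have cE : x = \sum_(b < nk) (s * \sum_(a < nk | (nk' <= a)%N) d a * z ^- (b * a)) *: e b.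
  by rewrite xE phi_sum.
split; first by exists (fun b : 'I_nk => s * \sum_(a < nk | (nk' <= a)%N) d a * z ^- (b * a)).
rewrite Zop_mul big1 ?scaler0 // => b' _.
suff -> : \sum_(a < nk) z ^+ (b' * a) * cdot (e a) x = 0 by rewrite scale0r.
rewrite cE; under eq_bigr => a _ do rewrite (cdot_basis _ _ He).
rewrite (eq_bigr (fun a : 'I_nk => \sum_(j < nk | (nk' <= j)%N) s * (d j * (z ^+ (a * b') * z ^- (a * j))))); last first.
  move=> a _; rewrite mulr_sumr mulr_sumr; apply: eq_bigr => j _.
  rewrite (mulnC b' a); ring.
rewrite exchange_big /= big1 // => j Hj.
rewrite -mulr_sumr -mulr_sumr zeta_orthn //; last exact: (leq_trans (ltn_ord b') Hmn).
by rewrite ltn_eqF ?mul0r ?mulr0 // (leq_trans (ltn_ord b') Hj).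
Qed.
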